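(* Let $\mathcal{B}\subseteq\mathcal{C}^n$ be $f$-closed for all $f\in\mathbb{R}^n\setminus\mathbb{Z}^n$, and let $L\in\mathcal{C}^n$ be a polyhedron given by $L=\operatorname{conv}(V)+\operatorname{cone}(W)$, where $V$ is a nonempty finite subset of $\mathbb{R}^n$ and $W$ is a finite (possibly empty) subset of $\mathbb{R}^n\setminus\{0\}$. Then \[\frac{1}{|V|+|W|+1}\sup_{f\in\mathbb{R}^n\setminus\mathbb{Z}^n}\inf_{B\in\mathcal{B}}\rho_f(B,L)\le\rho(\mathcal{B},L)\le\sup_{f\in\mathbb{R}^n\setminus\mathbb{Z}^n}\inf_{B\in\mathcal{B}}\rho_f(B,L).\]
   Context: $\mathcal{C}^n$ is the family of all $n$-dimensional closed convex subsets of $\mathbb{R}^n$. For $B\in\mathcal{C}^n$ with $0\in\operatorname{int}(B)$, $\psi_B(r)=\inf\{\lambda>0:r\in\lambda B\}$. For $k\in\mathbb{N}$, $R=(r_1,\dots,r_k)\in\mathbb{R}^{n\times k}$, $f\in\mathbb{R}^n\setminus\mathbb{Z}^n$, $B\in\mathcal{C}^n$: if $f\in\operatorname{int}(B)$, $C_B(R,f)=\{s\in\mathbb{R}^k_{\ge0}:\sum_j s_j\psi_{B-f}(r_j)\ge1\}$, otherwise $C_B(R,f)=\mathbb{R}^k_{\ge0}$; $C_{\mathcal{B}}(R,f)=\bigcap_{B\in\mathcal{B}}C_B(R,f)$ ($=\mathbb{R}^k_{\ge0}$ if $\mathcal{B}=\emptyset$). $\rho_f(B,L)=\inf\{\alpha>0:C_B(R,f)\subseteq\frac1\alpha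 C_L(R,f)$ for all $k$, $R\}$; $\rho_f(\mathcal{B},L)=\inf\{\alpha>0:C_{\mathcal{B}}(R,f)\subseteq\frac1\alpha C_L(R,f)$ for all $k$, $R\}$; $\rho(\mathcal{B},L)=\sup_{f\in\mathbb{R}^n\setminus\mathbb{Z}^n}\rho_f(\mathcal{B},L)$. $\mathcal{B}_f$ denotes the sets of $\mathcal{B}$ containing $f$ in the interior, $\mathcal{C}^n_f$ likewise. $\mathcal{B}$ is $f$-closed if whenever $B_t\in\mathcal{B}_f$, $C\in\mathcal{C}^n_f$ and $\psi_{B_t-f}\to\psi_{C-f}$ pointwise, then $C\in\mathcal{B}_f$. *)

(* Defs.v *)
From HB Require Import structures.
From mathcomp Require Import all_boot all_order all_algebra.
From mathcomp Require Import all_classical all_reals all_analysis.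
Set Implicit Arguments. Unset Strict Implicit. Unset Printing Implicit Defensive.
Import Order.TTheory GRing.Theory Num.Theory.
Import numFieldNormedType.Exports.
Local Open Scope classical_set_scope.
Local Open Scope ring_scope.

Section Defs.
Variables (R : realType) (n : nat).
Notation vec := 'cV[R]_n.

Definition inZn (f : vec) : Prop := forall i : 'I_n, f i ord0 \is a Num.int.

Definition convex_set (B : set vec) : Prop :=
  forall x y t, B x -> B y -> 0 <= t -> t <= 1 -> B (t *: x + (1 - t) *: y).

(* C^n : n-dimensional closed convex subsets of R^n
   (for convex sets, n-dimensional <=> nonempty interior) *)
Definition Cn (B : set vec) : Prop :=
  closed B /\ convex_set B /\ interior B !=set0.

Definition translate (B : set vec) (f : vec) : set vec := [set b - f | b in B].

Definition gauge (K : set vec) (r : vec) : R :=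
  inf [set l : R | 0 < l /\ exists b, K b /\ r = l *: b].

Definition CB (B : set vec) (f : vec) (k : nat) (Rm : 'M[R]_(n, k)) : set 'cV[R]_k :=
  [set s : 'cV[R]_k | (forall j, 0 <= s j ord0) /\
     (interior B f -> 1 <= \sum_(j < k) s j ord0 * gauge (translate B f) (col j Rm))].

(* C_calB(R,f) = intersection over calB (orthant if calB is empty) *)
Definition CcalB (calB : set (set vec)) (f : vec) (k : nat) (Rm : 'M[R]_(n, k))
  : set 'cV[R]_k :=
  [set s : 'cV[R]_k | (forall j, 0 <= s j ord0) /\ (forall B, calB B -> CB B f Rm s)].

Definition scale_set (k : nat) (c : R) (S : set 'cV[R]_k) : set 'cV[R]_k :=
  [set c *: s | s in S].

Definition rho_gen (C1 C2 : forall k, 'M[R]_(n, k) -> set 'cV[R]_k) : \bar R :=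
  ereal_inf [set a%:E | a in
    [set a : R | 0 < a /\
       forall (k : nat) (Rm : 'M[R]_(n, k)), C1 k Rm `<=` scale_set a^-1 (C2 k Rm)]].

Definition rho_f (f : vec) (B L : set vec) : \bar R :=
  rho_gen (fun k Rm => CB B f Rm) (fun k Rm => CB L f Rm).

Definition rho_fam_f (f : vec) (calB : set (set vec)) (L : set vec) : \bar R :=
  rho_gen (fun k Rm => CcalB calB f Rm) (fun k Rm => CB L f Rm).

Definition rho (calB : set (set vec)) (L : set vec) : \bar R :=
  ereal_sup [set rho_fam_f f calB L | f in [set f | ~ inZn f]].

Definition sup_inf_rho (calB : set (set vec)) (L : set vec) : \bar R :=
  ereal_sup [set ereal_inf [set rho_f f B L | B in calB] | f in [set f | ~ inZn f]].

Definition f_closed (f : vec) (calB : set (set vec)) : Prop :=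
  forall (Bt : nat -> set vec) (C : set vec),
    (forall t, calB (Bt t) /\ interior (Bt t) f) ->
    Cn C -> interior C f ->
    (forall r, (fun t => gauge (translate (Bt t) f) r) @ \oo --> gauge (translate C f) r) ->
    calB C /\ interior C f.

Definition conv_hull (V : seq vec) : set vec :=
  [set x | exists lam : 'I_(size V) -> R, (forall i, 0 <= lam i) /\
     \sum_(i < size V) lam i = 1 /\ x = \sum_(i < size V) lam i *: V`_i].

Definition cone_hull (W : seq vec) : set vec :=
  [set x | exists mu : 'I_(size W) -> R, (forall i, 0 <= mu i) /\
     x = \sum_(i < size W) mu i *: W`_i].

Definition minkowski_sum (A B : set vec) : set vec := [set a + b | a in A & b in B].

End Defs.

(* Main.v *)
Require Import Defs.
From HB Require Import structures.
From mathcomp Require Import all_boot all_order all_algebra.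
From mathcomp Require Import all_classical all_reals all_analysis.
Import Order.TTheory GRing.Theory Num.Theory.
Import numFieldNormedType.Exports.
Local Open Scope classical_set_scope.
Local Open Scope ring_scope.

From mathcomp Require Import ring lra.

Set Implicit Arguments. Unset Strict Implicit.


Lemma le_eps (R : realType) (x y : R) : (forall e, 0 < e -> x <= y + e) -> x <= y.
Proof.
move=> H; rewrite leNgt; apply/negP => yx.
have := H ((x - y) / 2); rewrite divr_gt0 ?subr_gt0 // => /(_ isT); lra.
Qed.

Section Gauge.
Variables (R : realType) (n : nat).
Notation vec := 'cV[R]_n.

Definition gset (K : set vec) (r : vec) : set R :=
  [set l : R | 0 < l /\ exists b, K b /\ r = l *: b].

Lemma gaugeE K r : gauge K r = inf (gset K r). Proof. by []. Qed.

Variable K : set vec.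
Hypothesis Kc : Defs.convex_set K.
Hypothesis K0 : K 0.
Hypothesis Kab : forall r, gset K r !=set0.

Lemma gset_lb r : has_lbound (gset K r).
Proof. by exists 0 => l [/ltW]. Qed.

Lemma gset_inf r : has_inf (gset K r).
Proof. by split; [exact: Kab|exact: gset_lb]. Qed.

Lemma gauge_ge0 r : 0 <= gauge K r.
Proof. by apply: lb_le_inf; [exact: Kab| move=> l [/ltW]]. Qed.

Lemma gauge_le r l : gset K r l -> gauge K r <= l.
Proof. by move=> Hl; apply: ge_inf => //; exact: gset_lb. Qed.

Lemma gauge_leZ b c : K b -> 0 < c -> gauge K (c *: b) <= c.
Proof. by move=> Kb c0; apply: gauge_le; split => //; exists b. Qed.

Lemma gauge_lt r c : gauge K r < c -> exists b, K b /\ r = c *: b.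
Proof.
move=> /(inf_lt (Kab r)) [l [l0 [b [Kb ->]]] lc].
have c0 : 0 < c by apply: lt_trans lc.
exists ((l / c) *: b); split; last by rewrite scalerA mulrCA divff ?gt_eqF // mulr1.
have := @Kc b 0 (l / c) Kb K0; rewrite scaler0 addr0; apply.
  by rewrite divr_ge0 // ltW.
by rewrite ler_pdivrMr // mul1r ltW.
Qed.

Lemma gauge_ltP r c : gauge K r < c -> exists2 l, gset K r l & l < c.
Proof. exact: inf_lt (Kab r). Qed.

Lemma gauge0 : gauge K 0 = 0.
Proof.
apply/eqP; rewrite eq_le gauge_ge0 andbT; apply: le_eps => e e0.
by rewrite add0r; apply: gauge_le; split => //; exists 0; rewrite scaler0.
Qed.

Lemma gaugeZ t r : 0 <= t -> gauge K (t *: r) <= t * gauge K r.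
Proof.
rewrite le_eqVlt => /orP[/eqP<-|t0]; first by rewrite scale0r mul0r gauge0.
rewrite -ler_pdivrMl //; apply: lb_le_inf; first exact: Kab.
move=> l [l0 [b [Kb ->]]]; rewrite ler_pdivrMl //; rewrite scalerA.
by apply: gauge_leZ => //; rewrite mulr_gt0.
Qed.

Lemma gaugeD x y : gauge K (x + y) <= gauge K x + gauge K y.
Proof.
apply: le_eps => e e0.
have [l1 [l10 [b1 [Kb1 ->]]] h1] := @inf_adherent _ _ (e/2) (divr_gt0 e0 (ltr0Sn _ 1)) (gset_inf x).
have [l2 [l20 [b2 [Kb2 ->]]] h2] := @inf_adherent _ _ (e/2) (divr_gt0 e0 (ltr0Sn _ 1)) (gset_inf y).
have s0 : 0 < l1 + l2 by rewrite addr_gt0.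
have -> : l1 *: b1 + l2 *: b2 = (l1 + l2) *: ((l1 / (l1 + l2)) *: b1 + (1 - l1 / (l1 + l2)) *: b2).
  rewrite scalerDr !scalerA mulrCA divff ?gt_eqF // mulr1; congr (_ + _); congr (_ *: _).
  by field; rewrite gt_eqF.
apply: le_trans (gauge_leZ _ s0) _.
  apply: Kc => //; first by rewrite divr_ge0 // ltW.
  by rewrite ler_pdivrMr // mul1r lerDl ltW.
rewrite /gauge; lra.
Qed.

End Gauge.

Section Trans.
Variables (R : realType) (n : nat).
Notation vec := 'cV[R]_n.

Definition goodK (K : set vec) := [/\ Defs.convex_set K, K 0 & forall r, gset K r !=set0].

Lemma interior_ballP (B : set vec) f :
  interior B f <-> exists2 e, 0 < e & forall y : vec, `|y| < e -> B (f + y).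
Proof.
split.
  move=> /nbhs_ballP [e e0 Hb]; exists e => // y ye; apply: Hb.
  by rewrite -ball_normE /ball_ /= opprD addrA subrr add0r normrN.
move=> [e e0 H]; apply/nbhs_ballP; exists e => // y.
rewrite -ball_normE /ball_ /= => hy.
have -> : y = f + (y - f) by rewrite addrCA subrr addr0.
by apply: H; rewrite -normrN opprB.
Qed.

Lemma interior_ray (B : set vec) f r : interior B f -> exists2 t, 0 < t & B (f + t *: r).
Proof.
move=> /interior_ballP [e e0 H].
have r1 : 0 < `|r| + 1 by rewrite ltr_wpDl.
exists (e / (`|r| + 1) / 2); first by rewrite !divr_gt0.
apply: H; rewrite normrZ ger0_norm; last by rewrite !divr_ge0 // ltW.
have : `|r| / (`|r| + 1) <= 1 by rewrite ler_pdivrMr // mul1r lerDl.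
have : 0 <= `|r| / (`|r| + 1) by rewrite divr_ge0 // ltW.
set q := `|r| / _ => q0 q1.
have -> : e / (`|r| + 1) / 2 * `|r| = e / 2 * q by rewrite /q; field; rewrite gt_eqF.
nra.
Qed.

Lemma tr_convex (B : set vec) f : Defs.convex_set B -> Defs.convex_set (translate B f).
Proof.
move=> Bc _ _ t [x Bx <-] [y By <-] t0 t1; exists (t *: x + (1 - t) *: y).
  exact: Bc.
by apply/matrixP => i j; rewrite !mxE; ring.
Qed.

Lemma good_tr (B : set vec) f : Defs.convex_set B -> interior B f -> goodK (translate B f).
Proof.
move=> Bc Bf; split; first exact: tr_convex.
  by exists f; [exact: interior_subset|rewrite subrr].
move=> r; have [t t0 Bt] := interior_ray r Bf.
exists t^-1; split; first by rewrite invr_gt0.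
exists (t *: r); split; first by exists (f + t *: r) => //; rewrite addrC addKr.
by rewrite scalerA mulVf ?gt_eqF // scale1r.
Qed.

Section GK.
Variable K : set vec.
Hypothesis gK : goodK K.
Lemma gK_ge0 r : 0 <= gauge K r. Proof. by case: gK => ? ? ?; exact: gauge_ge0. Qed.
Lemma gK_lt r c : gauge K r < c -> exists b, K b /\ r = c *: b.
Proof. by case: gK => ? ? ?; exact: gauge_lt. Qed.
Lemma gK_ltP r c : gauge K r < c -> exists2 l, gset K r l & l < c.
Proof. by case: gK => ? ? ?; exact: gauge_ltP. Qed.
Lemma gK0 : gauge K 0 = 0. Proof. by case: gK => ? ? ?; exact: gauge0. Qed.
Lemma gKZ t r : 0 <= t -> gauge K (t *: r) <= t * gauge K r.
Proof. by case: gK => ? ? ?; exact: gaugeZ. Qed.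
Lemma gKD x y : gauge K (x + y) <= gauge K x + gauge K y.
Proof. by case: gK => ? ? ?; exact: gaugeD. Qed.
End GK.

Lemma gauge_sum (K : set vec) m (c : 'I_m -> R) (x : 'I_m -> vec) : goodK K ->
  (forall i, 0 <= c i) ->
  gauge K (\sum_(i < m) c i *: x i) <= \sum_(i < m) c i * gauge K (x i).
Proof.
move=> gK c0.
apply: (big_ind2 (fun a b => gauge K a <= b)).
- by rewrite gK0.
- move=> a1 b1 a2 b2 h1 h2; apply: le_trans (gKD gK _ _) _; exact: lerD.
- by move=> i _; exact: gKZ.
Qed.

End Trans.

Section Ext.
Variable R : realType.

Lemma near_oo_nat (P : nat -> Prop) : (exists M, forall N, (M <= N)%N -> P N) -> \forall N \near \oo, P N.
Proof. by move=> [M HM]; exists M => // N /= /HM. Qed.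

Lemma near_oo_natP (P : nat -> Prop) : (\forall N \near \oo, P N) -> exists M, forall N, (M <= N)%N -> P N.
Proof. by move=> [M _ HM]; exists M => N /HM. Qed.

Lemma incr_ge (f : nat -> nat) : {mono f : a b / (a <= b)%N >-> (a <= b)%O} -> forall m, (m <= f m)%N.
Proof.
move=> fi; elim=> [//|m ih]; apply: leq_ltn_trans ih _.
by have := fi m.+1 m; rewrite ltnn; move/negbT; rewrite -ltnNge.
Qed.

Lemma bw (s : nat -> R) (B : R) : (forall N, `|s N| <= B) ->
  exists g : nat -> nat, (forall m, (m <= g m)%N) /\ cvgn (s \o g).
Proof.
move=> sB.
have bs : bounded_fun s.
  exists B; split; first by rewrite num_real.
  by move=> M BM x _; apply: le_trans (sB x) (ltW BM).
have [g gi gc] := bolzano_weierstrass bs.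
by exists g; split => //; exact: incr_ge.
Qed.

End Ext.

Lemma diag (R : realType) (s : nat -> nat -> R) (B : nat -> R) :
  (forall p N, `|s p N| <= B p) ->
  exists phi : nat -> nat, (forall m, (m <= phi m)%N) /\ forall p, cvgn (s p \o phi).
Proof.
move=> sB.
have /choice [ext Hext] : forall ps : nat * (nat -> nat), exists g : nat -> nat,
    (forall m, (m <= g m)%N) /\ cvgn (s ps.1 \o ps.2 \o g).
  by move=> [p sg]; apply: (@bw _ _ (B p)) => N; exact: sB.
pose sig := fix sig (p : nat) : nat -> nat :=
  match p with 0 => id | p'.+1 => sig p' \o ext (p', sig p') end.
have P1 : forall p m, (m <= sig p m)%N.
  elim=> [//|p ih] m /=; apply: leq_trans (ih _); exact: (Hext (p, sig p)).1.
have P2 : forall p q, exists h : nat -> nat, (forall m, (m <= h m)%N) /\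
    forall m, sig (p + q)%N m = sig p (h m).
  move=> p; elim=> [|q [h [h1 h2]]]; first by exists id; rewrite addn0.
  exists (h \o ext (p + q, sig (p + q))%N); split.
    move=> m /=; apply: leq_trans (h1 _); exact: (Hext (_, _)).1.
  by move=> m; rewrite addnS /= h2.
have P3 : forall p, cvgn (s p \o sig p.+1) by move=> p; exact: (Hext (p, sig p)).2.
exists (fun N => sig N.+1 N); split; first by move=> m; exact: P1.
move=> p; apply/cvg_ex; exists (lim (s p \o sig p.+1 @ \oo)).
apply/cvgrPdist_lt => e e0.
have /cvgrPdist_lt /(_ e e0) /near_oo_natP [M HM] := P3 p.
apply: near_oo_nat; exists (maxn M p.+1) => N; rewrite geq_max => /andP[MN pN].
have [h [h1 h2]] := P2 p.+1 (N - p)%N.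
have := h2 N; rewrite addSn subnKC ?(ltnW pN) // => /= ->.
by apply: HM; apply: leq_trans MN (h1 N).
Qed.

Section Dense.
Variables (R : realType) (n : nat).
Notation vec := 'cV[R]_n.

Lemma entry_le_norm (x : vec) k : `|x k ord0| <= `|x|.
Proof.
rewrite [leRHS]/Num.Def.normr /= mx_normrE; apply/bigmax_geP; right => /=.
by exists (k, ord0).
Qed.

Lemma norm_lt (x : vec) e : 0 < e -> (forall k, `|x k ord0| < e) -> `|x| < e.
Proof.
move=> e0 H; rewrite [ltLHS]/Num.Def.normr /= mx_normrE; apply/bigmax_ltP; split => //.
by move=> [i j] _ /=; rewrite ord1.
Qed.

Definition Dseq (p : nat) : vec :=
  match (unpickle p : option 'cV[rat]_n) with Some q => map_mx ratr q | None => 0 end.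

Lemma Dseq_dense (x : vec) e : 0 < e -> exists p, `|x - Dseq p| < e.
Proof.
move=> e0.
have /fin_all_exists [qf Hq] : forall k : 'I_n, exists q : rat,
    ratr q \in `](x k ord0 - e / 2), (x k ord0 + e / 2)[.
  move=> k; apply: rat_in_itvoo.
  have : 0 < e / 2 by rewrite divr_gt0. lra.
exists (pickle (\col_k qf k : 'cV[rat]_n)); rewrite /Dseq pickleK.
apply: norm_lt => // k; rewrite !mxE.
move: (Hq k); rewrite in_itv /= => /andP[h1 h2].
rewrite ltr_norml; apply/andP; split; lra.
Qed.

End Dense.

Lemma extract (R : realType) n (u : nat -> 'cV[R]_n -> R) (L : R) : 0 < L ->
  (forall N x, `|u N x| <= L * `|x|) ->
  (forall N x y, `|u N x - u N y| <= L * `|x - y|) ->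
  exists phi : nat -> nat, (forall m, (m <= phi m)%N) /\
    forall x, cvgn (fun N => u (phi N) x).
Proof.
move=> L0 ub uL.
have [phi [phi1 phic]] := @diag R (fun p N => u N (Dseq R n p)) (fun p => L * `|Dseq R n p|)
   (fun p N => ub N _).
exists phi; split => // x.
apply/cauchy_cvgP; apply/cauchy_exP => e e0.
have e4 : 0 < e / 4 / L by rewrite !divr_gt0.
have [p Hp] := Dseq_dense x e4.
have /cvgrPdist_lt /(_ (e / 4)) := phic p.
move=> /(_ (divr_gt0 e0 (ltr0Sn _ 3))) /near_oo_natP [M HM].
exists (lim ((fun p0 N => u N (Dseq R n p0)) p \o phi @ \oo)).
apply: near_oo_nat; exists M => N MN; rewrite -ball_normE /=.
have h1 := HM N MN; have h2 := uL (phi N) (Dseq R n p) x.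
set l := lim _ in h1 *; move: h1 h2 => /=; set a := u _ (Dseq R n p); set b := u _ x.
move=> h1 h2.
have h3 : L * `|Dseq R n p - x| <= e / 4.
  rewrite -normrN opprB; rewrite -ler_pdivlMl // mulrC; exact: ltW.
have : `|l - b| <= `|l - a| + `|a - b|.
  by have := ler_normD (l - a) (a - b); rewrite addrA subrK.
lra.
Qed.

Lemma lim_le2 (R : realType) (a b d : nat -> R) c1 c2 : cvgn a -> cvgn b -> cvgn d ->
  (forall N, a N <= c1 * b N + c2 * d N) ->
  limn a <= c1 * limn b + c2 * limn d.
Proof.
move=> ca cb cd H.
have cv : (fun N => c1 * b N + c2 * d N) @ \oo --> c1 * limn b + c2 * limn d.
  apply: cvgD; apply: cvgM => //; exact: cvg_cst.
rewrite -(cvg_lim _ cv) //; apply: ler_lim => //; first by apply/cvg_ex; eexists; exact: cv.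
by apply: nearW.
Qed.

Lemma lim_le_cst (R : realType) (a : nat -> R) c : cvgn a -> (forall N, a N <= c) -> limn a <= c.
Proof. by move=> ca H; apply: limr_le => //; apply: nearW. Qed.

Lemma lim_ge_cst (R : realType) (a : nat -> R) c : cvgn a -> (forall N, c <= a N) -> c <= limn a.
Proof. by move=> ca H; apply: limr_ge => //; apply: nearW. Qed.

Unset Implicit Arguments. Set Strict Implicit.

Section LimSet.
Variables (R : realType) (n : nat).
Notation vec := 'cV[R]_n.
Variables (u : nat -> vec -> R) (Lam : R).
Hypothesis Lam0 : 0 < Lam.
Hypothesis u0 : forall N x, 0 <= u N x.
Hypothesis uD : forall N x y, u N (x + y) <= u N x + u N y.
Hypothesis uZ : forall N t x, 0 <= t -> u N (t *: x) <= t * u N x.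
Hypothesis ub : forall N x, u N x <= Lam * `|x|.
Hypothesis uc : forall x, cvgn (fun N => u N x).

Definition psi x := limn (fun N => u N x).

Lemma psi0 x : 0 <= psi x. Proof. exact: lim_ge_cst. Qed.
Lemma psiD x y : psi (x + y) <= psi x + psi y.
Proof.
have c1 := uc (x + y); have c2 := uc x; have c3 := uc y.
have := @lim_le2 R (fun N => u N (x + y)) _ _ 1 1 c1 c2 c3.
by rewrite !mul1r; apply => N; rewrite !mul1r.
Qed.
Lemma psiZ t x : 0 <= t -> psi (t *: x) <= t * psi x.
Proof.
move=> t0; have c1 := uc (t *: x); have c2 := uc x.
have := @lim_le2 R (fun N => u N (t *: x)) _ _ t 0 c1 c2 c2.
by rewrite mul0r addr0; apply => N; rewrite mul0r addr0; exact: uZ.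
Qed.
Lemma psiZeq t x : 0 < t -> psi (t *: x) = t * psi x.
Proof.
move=> t0; apply/eqP; rewrite eq_le; apply/andP; split; first exact: psiZ (ltW t0).
have := psiZ (t^-1) (t *: x); rewrite scalerA mulVf ?gt_eqF // scale1r.
rewrite invr_ge0 ltW // => /(_ isT) h.
by have := ler_wpM2l (ltW t0) h; rewrite mulrA mulfV ?gt_eqF // mul1r.
Qed.
Lemma psib x : psi x <= Lam * `|x|. Proof. exact: lim_le_cst. Qed.
Lemma psiLip x y : psi x <= psi y + Lam * `|x - y|.
Proof.
have := psiD y (x - y); rewrite addrC subrK => h.
apply: le_trans h _; rewrite lerD2l; exact: psib.
Qed.

Variable f : vec.
Definition Cset := [set x : vec | psi (x - f) <= 1].

Lemma Cset_int : interior Cset f.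
Proof.
apply/interior_ballP; exists Lam^-1; first by rewrite invr_gt0.
move=> y hy; rewrite /Cset /= addrC addKr.
apply: le_trans (psib y) _; rewrite -ler_pdivlMl // mulr1; exact: ltW.
Qed.

Lemma Cset_closed : closed Cset.
Proof.
move=> x clx; rewrite /Cset /=; apply: le_eps => e e0.
have ee : 0 < e / Lam by rewrite divr_gt0.
have [y [Cy xy]] := clx (ball x (e / Lam)) (nbhsx_ballx _ _ ee).
move: xy; rewrite -ball_normE /ball_ /= => xy.
apply: le_trans (psiLip _ (y - f)) _.
have -> : x - f - (y - f) = x - y by rewrite opprB addrA subrK.
have : Lam * `|x - y| <= e by rewrite -ler_pdivlMl // mulrC ltW.
rewrite /Cset /= in Cy; lra.
Qed.

Lemma Cset_convex : Defs.convex_set Cset.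
Proof.
move=> x y t Cx Cy t0 t1; rewrite /Cset /=.
have -> : t *: x + (1 - t) *: y - f = t *: (x - f) + (1 - t) *: (y - f).
  by apply/matrixP => i j; rewrite !mxE; ring.
apply: le_trans (psiD _ _) _.
have h1 := psiZ t (x - f) t0.
have h2 := psiZ (1 - t) (y - f); rewrite subr_ge0 in h2; have {}h2 := h2 t1.
rewrite /Cset /= in Cx Cy.
have : t * psi (x - f) <= t by rewrite -[leRHS]mulr1 ler_wpM2l.
have : (1 - t) * psi (y - f) <= 1 - t by rewrite -[leRHS]mulr1 ler_wpM2l // subr_ge0.
lra.
Qed.

Lemma Cset_Cn : Cn Cset.
Proof.
split; first exact: Cset_closed.
split; first exact: Cset_convex.
by exists f; exact: Cset_int.
Qed.

Lemma gauge_Cset r : gauge (translate Cset f) r = psi r.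
Proof.
have mem l : 0 < l -> psi r <= l -> gset (translate Cset f) r l.
  move=> l0 hl; split => //; exists (l^-1 *: r); split.
    exists (f + l^-1 *: r); last by rewrite addrC addKr.
    rewrite /Cset /= addrC addKr.
    apply: le_trans (psiZ _ _ _) _; first by rewrite invr_ge0 ltW.
    by rewrite ler_pdivrMl // mulr1.
  by rewrite scalerA mulfV ?gt_eqF // scale1r.
apply/eqP; rewrite eq_le; apply/andP; split.
  apply: le_eps => e e0; apply: ge_inf.
    by exists 0 => l [/ltW].
  apply: mem; last by rewrite lerDl ltW.
  by apply: lt_le_trans e0 _; rewrite lerDr psi0.
apply: lb_le_inf.
  exists (psi r + 1); apply: mem; last by rewrite lerDl.
  by apply: lt_le_trans (ltr01) _; rewrite lerDr psi0.
move=> l [l0 [b [[c Cc <-] ->]]].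
rewrite psiZeq //; rewrite /Cset /= in Cc.
by rewrite -[leRHS]mulr1 ler_wpM2l // ltW.
Qed.

End LimSet.

Section Poly.
Variables (R : realType) (n : nat).
Notation vec := 'cV[R]_n.
Variables (V W : seq vec) (L : set vec) (f : vec).
Hypothesis HL : L = minkowski_sum (conv_hull V) (cone_hull W).

Lemma sum_ind m (j : 'I_m) (s : R) (X : 'I_m -> vec) :
  \sum_(k < m) ((k == j)%:R * s) *: X k = s *: X j.
Proof.
rewrite (bigD1 j) //= eqxx mul1r big1 ?addr0 // => k /negbTE ->.
by rewrite mul0r scale0r.
Qed.

Lemma L_rep x : L x -> exists (lam : 'I_(size V) -> R) (mu : 'I_(size W) -> R),
  [/\ forall i, 0 <= lam i, \sum_i lam i = 1, forall j, 0 <= mu j &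
   x - f = \sum_i lam i *: (V`_i - f) + \sum_j mu j *: W`_j].
Proof.
rewrite HL => -[a [lam [l0 [l1 ->]]] [c [mu [m0 ->]]] <-].
exists lam, mu; split => //.
rewrite addrAC; congr (_ + _).
under [RHS]eq_bigr do rewrite scalerBr.
by rewrite sumrB -scaler_suml l1 scale1r.
Qed.

Lemma poly_bound x : L x -> exists M, 0 <= M /\ forall K b g, goodK K ->
  (forall i : 'I_(size V), gauge K (V`_i - f) <= b) ->
  (forall j : 'I_(size W), gauge K W`_j <= g) -> 0 <= g ->
  gauge K (x - f) <= b + g * M.
Proof.
move=> /L_rep [lam [mu [l0 l1 m0 ->]]].
exists (\sum_j mu j); split; first by apply: sumr_ge0 => j _.
move=> K b g gK hV hW g0.
apply: le_trans (gKD gK _ _) _; apply: lerD.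
  apply: le_trans (gauge_sum _ gK l0) _.
  apply: (@le_trans _ _ (\sum_i lam i * b)).
    by apply: ler_sum => i _; apply: ler_wpM2l.
  by rewrite -mulr_suml l1 mul1r.
apply: le_trans (gauge_sum _ gK m0) _.
rewrite mulr_sumr; apply: ler_sum => j _; rewrite [leRHS]mulrC; exact: ler_wpM2l.
Qed.

Hypothesis Hf : interior L f.

Lemma gsetL_ne r : gset (translate L f) r !=set0.
Proof.
have [t t0 Lt] := interior_ray r Hf.
exists t^-1; split; first by rewrite invr_gt0.
exists (t *: r); split; first by exists (f + t *: r) => //; rewrite addrC addKr.
by rewrite scalerA mulVf ?gt_eqF // scale1r.
Qed.

Lemma dom_gauge K b : goodK K -> 0 < b -> (forall x, L x -> gauge K (x - f) <= b) ->
  forall r, gauge K r <= b * gauge (translate L f) r.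
Proof.
move=> gK b0 H r; rewrite -ler_pdivrMl //; apply: lb_le_inf; first exact: gsetL_ne.
move=> l [l0 [y [[x Lx <-] ->]]]; rewrite ler_pdivrMl //.
apply: le_trans (gKZ gK _ (ltW l0)) _; rewrite mulrC; apply: ler_wpM2r; first exact: ltW.
exact: H.
Qed.

Lemma L_V (i : 'I_(size V)) : L V`_i.
Proof.
rewrite HL; exists V`_i; last first.
  by exists 0; [exists (fun=> 0); split => //; rewrite big1 // => j _; rewrite scale0r|rewrite addr0].
exists (fun k => (k == i)%:R); split; first by move=> k; rewrite ler0n.
split; first by rewrite (bigD1 i) //= eqxx big1 ?addr0 // => k /negbTE ->.
by rewrite (bigD1 i) //= eqxx scale1r big1 ?addr0 // => k /negbTE ->; rewrite scale0r.
Qed.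

Lemma gL_V (i : 'I_(size V)) : gauge (translate L f) (V`_i - f) <= 1.
Proof.
apply: gauge_le; split => //; exists (V`_i - f); rewrite scale1r; split => //.
by exists V`_i => //; exact: L_V.
Qed.

Lemma gL_W (j : 'I_(size W)) : gauge (translate L f) W`_j <= 0.
Proof.
apply: le_eps => e e0; rewrite add0r; apply: gauge_le; split => //.
exists (e^-1 *: W`_j); split; last by rewrite scalerA mulfV ?gt_eqF // scale1r.
exists (f + e^-1 *: W`_j); last by rewrite addrC addKr.
have := interior_subset Hf; rewrite HL => -[a Ca [c [mu [m0 ->]]] <-].
exists a => //; exists (\sum_k mu k *: W`_k + e^-1 *: W`_j); last by rewrite addrA.
exists (fun k => mu k + (k == j)%:R * e^-1); split.
  by move=> k; rewrite addr_ge0 // mulr_ge0 // ?ler0n // invr_ge0 ltW.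
rewrite -(sum_ind _ j e^-1 (fun k => W`_k)) -big_split /=; by apply: eq_bigr => k _; rewrite scalerDl.
Qed.

End Poly.

Lemma term_le_sum (R : realType) m (F : 'I_m -> R) j : (forall k, 0 <= F k) -> F j <= \sum_k F k.
Proof. by move=> F0; rewrite (bigD1 j) //= lerDl sumr_ge0. Qed.

Section Main.
Variables (R : realType) (n : nat).
Notation vec := 'cV[R]_n.
Variables (calB : set (set vec)) (L : set vec) (V W : seq vec) (f : vec).
Hypothesis HB : calB `<=` @Cn R n.
Hypothesis Hcl : f_closed f calB.
Hypothesis HL : L = minkowski_sum (conv_hull V) (cone_hull W).
Hypothesis Hf : interior L f.
Variables (a b : R).
Hypothesis a0 : 0 < a.
Hypothesis b0 : 0 < b.
Hypothesis Ha : forall k (Rm : 'M[R]_(n, k)), CcalB calB f Rm `<=` scale_set a^-1 (CB L f Rm).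
Hypothesis hab : (size V)%:R * a < b.

Lemma exists_B (N : nat) : exists B, [/\ calB B, interior B f,
  forall i : 'I_(size V), gauge (translate B f) (V`_i - f) < b &
  forall j : 'I_(size W), N.+1%:R * gauge (translate B f) W`_j < 1].
Proof.
pose A : 'M[R]_(n, size V) := \matrix_(r, i) (V`_i - f) r ord0.
pose Wm : 'M[R]_(n, size W) := \matrix_(r, j) (W`_j) r ord0.
pose Rm := row_mx A Wm.
pose s : 'cV[R]_(size V + size W) := col_mx (const_mx b^-1) (const_mx N.+1%:R).
have sumE : forall g : vec -> R,
    \sum_(j < size V + size W) s j ord0 * g (col j Rm) =
    \sum_(i < size V) b^-1 * g (V`_i - f) + \sum_(j < size W) N.+1%:R * g W`_j.
  move=> g; rewrite big_split_ord /=; congr (_ + _); apply: eq_bigr => i _.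
    rewrite /s col_mxEu mxE; congr (_ * g _); apply/matrixP => r c.
    by rewrite mxE row_mxEl mxE (ord1 c).
  rewrite /s col_mxEd mxE; congr (_ * g _); apply/matrixP => r c.
  by rewrite mxE row_mxEr mxE (ord1 c).
have s0 : forall j, 0 <= s j ord0.
  move=> j; rewrite /s -[j](@splitK (size V) (size W)); case: (fintype.split j) => k /=.
    by rewrite col_mxEu mxE invr_ge0 ltW.
  by rewrite col_mxEd mxE ler0n.
have notL : ~ scale_set a^-1 (CB L f Rm) s.
  move=> [c [c0 cL] hc].
  have := cL Hf.
  have -> : c = a *: s by rewrite -hc scalerA mulfV ?gt_eqF // scale1r.
  under eq_bigr do rewrite mxE -mulrA.
  rewrite -mulr_sumr sumE.
  have h1 : \sum_(i < size V) b^-1 * gauge (translate L f) (V`_i - f) <= (size V)%:R * b^-1.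
    apply: (@le_trans _ _ (\sum_(i < size V) b^-1)).

      apply: ler_sum => i _; rewrite -[leRHS]mulr1; apply: ler_wpM2l; first by rewrite invr_ge0 ltW.
      exact: (@gL_V R n V W L f HL i).
    by rewrite sumr_const card_ord mulr_natl.
  have h2 : \sum_(j < size W) N.+1%:R * gauge (translate L f) W`_j <= 0.
    apply: sumr_le0 => j _; rewrite mulr_ge0_le0 //; exact: (@gL_W R n V W L f HL Hf j).
  have h3 : a * ((size V)%:R * b^-1) < 1.
    by rewrite mulrA ltr_pdivrMr // mul1r mulrC.
  move=> h4.
  have : a * (\sum_(i < size V) b^-1 * gauge (translate L f) (V`_i - f) +
     \sum_(j < size W) N.+1%:R * gauge (translate L f) W`_j) <= a * ((size V)%:R * b^-1).
    by rewrite ler_pM2l //; rewrite -[leRHS]addr0; exact: lerD.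
  lra.
have notB : ~ CcalB calB f Rm s by move=> /Ha.
have [B [cB nB]] : exists B, calB B /\ ~ CB B f Rm s.
  apply: contrapT => h; apply: notB; split => // B cB; apply: contrapT => nc.
  by apply: h; exists B.
have iB : interior B f by apply: contrapT => ni; apply: nB; split => // /ni.
have sB : \sum_(j < size V + size W) s j ord0 * gauge (translate B f) (col j Rm) < 1.
  by rewrite ltNge; apply/negP => h; apply: nB; split.
rewrite sumE in sB.
have gB : goodK (translate B f) by apply: good_tr => //; case: (HB _ cB) => _ [].
have T1 : 0 <= \sum_(i < size V) b^-1 * gauge (translate B f) (V`_i - f).
  by apply: sumr_ge0 => i _; apply: mulr_ge0; [rewrite invr_ge0 ltW|exact: (gK_ge0 gB)].
have T2 : 0 <= \sum_(j < size W) N.+1%:R * gauge (translate B f) W`_j.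
  by apply: sumr_ge0 => i _; apply: mulr_ge0; [exact: ler0n|exact: (gK_ge0 gB)].
exists B; split => //.
  move=> i.
  have h : b^-1 * gauge (translate B f) (V`_i - f) <=
      \sum_(k < size V) b^-1 * gauge (translate B f) (V`_k - f).
    apply: (@term_le_sum R _ (fun i => b^-1 * gauge (translate B f) (V`_i - f))) => k.
    by apply: mulr_ge0; [rewrite invr_ge0 ltW|exact: (gK_ge0 gB)].
  have : b^-1 * gauge (translate B f) (V`_i - f) < 1 by lra.
  by rewrite mulrC ltr_pdivrMr // mul1r.
move=> j.
have h : N.+1%:R * gauge (translate B f) W`_j <=
    \sum_(k < size W) N.+1%:R * gauge (translate B f) W`_k.
  apply: (@term_le_sum R _ (fun j => N.+1%:R * gauge (translate B f) W`_j)) => k.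
  by apply: mulr_ge0; [exact: ler0n|exact: (gK_ge0 gB)].
lra.
Qed.


Lemma main_C : exists C, [/\ calB C, interior C f &
  forall r, gauge (translate C f) r <= b * gauge (translate L f) r].
Proof.
have [Bs HBs] := choice exists_B.
pose u N x := gauge (translate (Bs N) f) x.
have gBs N : goodK (translate (Bs N) f).
  by have [cB iB _ _] := HBs N; apply: good_tr => //; case: (HB _ cB) => _ [].
have hV N (i : 'I_(size V)) : u N (V`_i - f) <= b.
  by have [_ _ h _] := HBs N; exact: ltW (h i).
have hW N (j : 'I_(size W)) : u N W`_j <= N.+1%:R^-1.
  have [_ _ _ h] := HBs N; rewrite -[_^-1]mulr1 ler_pdivlMl //; exact: ltW (h j).
have bnd : forall y, exists c, 0 <= c /\ forall N, u N y <= c.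
  move=> y; have [t t0 Lt] := interior_ray y Hf.
  have [M [M0 HM]] := @poly_bound R n V W L f HL _ Lt.
  exists (t^-1 * (b + M)); split.
    by apply: mulr_ge0; [rewrite invr_ge0 ltW|rewrite addr_ge0 // ltW].
  move=> N.
  have := HM _ b N.+1%:R^-1 (gBs N) (hV N) (hW N).
  rewrite invr_ge0 ler0n addrC addKr => /(_ isT) h.
  have e : y = t^-1 *: (t *: y) by rewrite scalerA mulVf ?gt_eqF // scale1r.
  rewrite /u e; apply: le_trans (gKZ (gBs N) _ _) _; first by rewrite invr_ge0 ltW.
  rewrite ler_pM2l ?invr_gt0 //; apply: le_trans h _; rewrite lerD2l.
  rewrite -[leRHS]mul1r ler_wpM2r // invf_le1 // ler1n //.
have /fin_all_exists [cb Hcb] : forall kb : 'I_n * bool, exists c, 0 <= c /\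
    forall N, u N ((if kb.2 then 1 else -1) *: delta_mx kb.1 ord0) <= c.
  by move=> kb; exact: bnd.
pose S := \sum_kb cb kb.
have S0 : 0 <= S by apply: sumr_ge0 => kb _; case: (Hcb kb).
pose Lam := S * n%:R + 1.
have Lam0 : 0 < Lam by rewrite ltr_wpDl // mulr_ge0.
have ub : forall N x, u N x <= Lam * `|x|.
  move=> N x.
  have xE : x = \sum_(k < n) `|x k ord0| *:
      ((if 0 <= x k ord0 then 1 else -1) *: delta_mx k ord0).
    rewrite [LHS]matrix_sum_delta; apply: eq_bigr => k _; rewrite big_ord1 scalerA.
    congr (_ *: _); case: ifP => h; first by rewrite mulr1 ger0_norm.
    by rewrite ltr0_norm ?mulrN1 ?opprK // ltNge h.
  rewrite /u {1}xE; apply: le_trans (gauge_sum _ (gBs N) (fun k => normr_ge0 _)) _.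
  apply: (@le_trans _ _ (\sum_(k < n) `|x| * S)).
    apply: ler_sum => k _; apply: ler_pM; [exact: normr_ge0|exact: (gK_ge0 (gBs N))| |].
      exact: entry_le_norm.
    apply: le_trans (proj2 (Hcb (k, 0 <= x k ord0)) N) _.
    by rewrite /S (bigD1 (k, 0 <= x k ord0)) //= lerDl sumr_ge0 // => kb _; case: (Hcb kb).
  rewrite sumr_const card_ord /Lam mulrDl mul1r.
  have -> : `|x| * S *+ n = S * n%:R * `|x| by rewrite -mulr_natr; ring.
  by rewrite lerDl normr_ge0.
have u0 : forall N x, 0 <= u N x by move=> N x; exact: (gK_ge0 (gBs N)).
have uabs : forall N x, `|u N x| <= Lam * `|x| by move=> N x; rewrite ger0_norm.
have uLip : forall N x y, `|u N x - u N y| <= Lam * `|x - y|.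
  move=> N x y; rewrite ler_norml; apply/andP; split.
    have := gKD (gBs N) x (y - x); rewrite addrC subrK -/(u N y) -/(u N x) => h.
    have := ub N (y - x); rewrite -normrN opprB => h2.
    rewrite /u in h2 *; lra.
  have := gKD (gBs N) y (x - y); rewrite addrC subrK -/(u N y) -/(u N x) => h.
  have := ub N (x - y) => h2.
  rewrite /u in h2 *; lra.
have [phi [phi1 phic]] := extract Lam0 uabs uLip.
pose u' N := u (phi N).
have u0' : forall N x, 0 <= u' N x by move=> N x; exact: u0.
have uD' : forall N x y, u' N (x + y) <= u' N x + u' N y by move=> N x y; exact: (gKD (gBs _)).
have uZ' : forall N t x, 0 <= t -> u' N (t *: x) <= t * u' N x by move=> N t x t0; exact: (gKZ (gBs _)).
have ub' : forall N x, u' N x <= Lam * `|x| by move=> N x; exact: ub.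
pose C := Cset R n u' f.
have CCn := Cset_Cn R n u' Lam Lam0 uD' uZ' ub' phic f.
have Cint := Cset_int R n u' Lam Lam0 ub' phic f.
have gC := gauge_Cset R n u' u0' uZ' phic f.
have [cC iC] : calB C /\ interior C f.
  apply: (Hcl (fun t => Bs (phi t))) => //.
    by move=> t; have [? ? _ _] := HBs (phi t); split.
  by move=> r; rewrite gC; exact: (phic r).
exists C; split => //.
have gCgood : goodK (translate C f) by apply: good_tr => //; exact: (Cset_convex R n u' uD' uZ' phic f).
apply: (dom_gauge R n L f Hf _ b gCgood b0) => x Lx.
have [M [M0 HM]] := @poly_bound R n V W L f HL _ Lx.
have := HM (translate C f) b 0 gCgood _ _ (lexx 0); rewrite mul0r addr0; apply.
  move=> i; rewrite gC; apply: lim_le_cst; first exact: (phic _).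
  by move=> N; exact: hV.
move=> j; rewrite gC; apply: le_eps => e e0; rewrite add0r.
apply: limr_le; first exact: (phic _).
have := near_infty_natSinv_lt (PosNum e0); apply: filterS => N hN /=.
apply: le_trans (hW (phi N) j) _; apply: ltW; apply: le_lt_trans hN.
by rewrite lef_pV2 ?posrE // ler_nat ltnS.
Qed.

End Main.

Section Fin.
Variables (R : realType) (n : nat).
Notation vec := 'cV[R]_n.

Lemma rho_gen_ge0 (C1 C2 : forall k, 'M[R]_(n, k) -> set 'cV[R]_k) :
  (0 <= rho_gen C1 C2)%E.
Proof. by apply: le_ereal_inf_tmp => _ [a [a0 _] <-]; rewrite lee_fin ltW. Qed.

Lemma rho_fam_le (calB : set (set vec)) L f B : calB B ->
  (rho_fam_f f calB L <= rho_f f B L)%E.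
Proof.
move=> cB; apply: le_ereal_inf => _ [a [a0 Ha] <-]; exists a => //; split => // k Rm s [s0 hs].
exact: Ha (hs B cB).
Qed.

Lemma rho_f_le (C L : set vec) f b : 0 < b -> interior C f ->
  (forall r, gauge (translate C f) r <= b * gauge (translate L f) r) ->
  (rho_f f C L <= b%:E)%E.
Proof.
move=> b0 iC H; apply: ereal_inf_lbound; exists b => //; split => // k Rm s [s0 sC].
exists (b *: s); last by rewrite scalerA mulVf ?gt_eqF // scale1r.
split; first by move=> j; rewrite mxE mulr_ge0 // ltW.
move=> _; apply: le_trans (sC iC) _; apply: ler_sum => j _; rewrite mxE -mulrA.
rewrite mulrCA; apply: ler_wpM2l => //; exact: H.
Qed.

Lemma rho_f_out (B L : set vec) f : ~ interior L f -> (rho_f f B L <= 0)%E.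
Proof.
move=> nL; apply/lee_addgt0Pr => e e0; rewrite add0e.
apply: ereal_inf_lbound; exists e => //; split => // k Rm s [s0 _].
exists (e *: s); last by rewrite scalerA mulVf ?gt_eqF // scale1r.
split => [j|/nL //]; by rewrite mxE mulr_ge0 // ltW.
Qed.

Lemma rho_fam_empty (L : set vec) f : interior L f -> rho_fam_f f set0 L = +oo%E.
Proof.
move=> iL; apply/eqP; rewrite eq_le leey /=; apply: le_ereal_inf_tmp.
move=> _ [a [a0 Ha] <-]; exfalso.
have := Ha 0%N 0 0; case.
  by split => [[]|B []].
by move=> c [_ /(_ iL)]; rewrite big_ord0 ler10.
Qed.

End Fin.

Lemma exists_g (R : realType) (n : nat) (L : set 'cV[R]_n) :
  Cn L -> (exists f : 'cV[R]_n, ~ inZn f) -> exists g, ~ inZn g /\ interior L g.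
Proof.
move=> [_ [_ [x xi]]] [f0 nf0].
case: (pselect (inZn x)) => zx; last by exists x.
have [i0 ni0] : exists i0 : 'I_n, ~ (f0 i0 ord0 \is a Num.int).
  by apply/existsNP => h; apply: nf0.
have oi : (interior L)° x by have := open_interior L; rewrite openE; apply.
have /interior_ballP [e e0 He] := oi.
pose s := Num.min e 1 / 2.
have s0 : 0 < s by rewrite divr_gt0 // lt_min e0 ltr01.
have se : s < e.
  have : Num.min e 1 <= e by rewrite ge_min lexx.
  rewrite /s; lra.
have s1 : s < 1.
  have : Num.min e 1 <= 1 by rewrite ge_min lexx orbT.
  rewrite /s; lra.
exists (x + s *: delta_mx i0 ord0); split; last first.
  apply: He; apply: norm_lt => // k; rewrite !mxE.
  case: (k == i0); rewrite /= ?mulr1 ?mulr0 ?normr0 ?gtr0_norm //.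
move=> h; have := h i0; rewrite !mxE eqxx /= mulr1 => h1.
have := rpredB h1 (zx i0); rewrite addrAC subrr add0r => /intrP [m hm].
move: s0 s1; rewrite hm ltr0z ltrz1 gtz0_ge1 => h2 h3.
by have := le_lt_trans h2 h3; rewrite ltxx.
Qed.

Theorem corollary4p3 (R : realType) (n : nat) (calB : set (set 'cV[R]_n))
  (L : set 'cV[R]_n) (V W : seq 'cV[R]_n) :
  calB `<=` @Cn R n ->
  (forall f : 'cV[R]_n, ~ inZn f -> f_closed f calB) ->
  Cn L ->
  V != [::] -> uniq V -> uniq W -> 0 \notin W ->
  L = minkowski_sum (conv_hull V) (cone_hull W) ->
  ((((size V + size W + 1)%:R : R)^-1)%:E * sup_inf_rho calB L <= rho calB L)%E /\
  (rho calB L <= sup_inf_rho calB L)%E.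
Proof.
move=> HB Hcl HCnL Vne _ _ _ HL.
have sV : (0 < size V)%N by case: (V) Vne.
split; last first.
  apply: ge_ereal_sup => _ [f nf <-].
  apply: (@le_trans _ _ (ereal_inf [set rho_f f B L | B in calB])).
    by apply: le_ereal_inf_tmp => _ [B cB <-]; exact: rho_fam_le.
  by apply: ereal_sup_ubound; exists f.
set m := (size V + size W + 1)%N.
have m0 : (0 < m)%N by rewrite /m addn1.
case: (pselect (exists f : 'cV[R]_n, ~ inZn f)) => [exf|nexf]; last first.
  have -> : sup_inf_rho calB L = -oo%E.
    apply/eqP; rewrite -leeNy_eq; apply: ge_ereal_sup => _ [f nf <-].
    by exfalso; apply: nexf; exists f.
  by rewrite mulrNy gtr0_sg ?invr_gt0 ?ltr0n // mul1e leNye.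
case: (pselect (calB !=set0)) => [[B0 cB0]|nB]; last first.
  have calB0 : calB = set0 by apply/seteqP; split => // x cx; apply: nB; exists x.
  have [g [ng ig]] := exists_g _ _ _ HCnL exf.
  have -> : rho calB L = +oo%E.
    apply/eqP; rewrite eq_le leey /=.
    rewrite -(rho_fam_empty _ _ _ _ ig) -calB0; apply: ereal_sup_ubound; by exists g.
  exact: leey.
suff H : (sup_inf_rho calB L <= m%:R%:E * rho calB L)%E.
  apply: le_trans (lee_wpmul2l _ H) _; first by rewrite lee_fin invr_ge0 ler0n.
  by rewrite muleA -EFinM mulVf ?pnatr_eq0 -?lt0n // mul1e.
apply: ge_ereal_sup => _ [f nf <-].
have rho_ge : (rho_fam_f f calB L <= rho calB L)%E by apply: ereal_sup_ubound; exists f.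
have r0 : (0 <= rho_fam_f f calB L)%E := rho_gen_ge0 _ _ _ _.
case: (pselect (interior L f)) => iL; last first.
  apply: (@le_trans _ _ 0%E).
    have hI : (ereal_inf [set rho_f f B L | B in calB] <= rho_f f B0 L)%E.
      by apply: ereal_inf_lbound; exists B0.
    exact: le_trans hI (rho_f_out _ _ B0 _ _ iL).
  by apply: mule_ge0; [rewrite lee_fin ler0n|exact: le_trans r0 rho_ge].
set I := ereal_inf _.
have key : (((size V)%:R^-1)%:E * I <= rho_fam_f f calB L)%E.
  apply: le_ereal_inf_tmp => _ [a [a0 Ha] <-].
  have : (I <= ((size V)%:R * a)%:E)%E.
    apply/lee_addgt0Pr => e e0.
    have b0 : 0 < (size V)%:R * a + e by rewrite addr_gt0 // mulr_gt0 // ltr0n.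
    have ltab : (size V)%:R * a < (size V)%:R * a + e by rewrite ltrDl.
    have [C [cC iC HC]] := main_C _ _ _ _ _ _ _ HB (Hcl f nf) HL iL _ _ a0 b0 Ha ltab.
    have hI : (I <= rho_f f C L)%E by apply: ereal_inf_lbound; exists C.
    apply: le_trans hI _.
    by rewrite -EFinD; apply: rho_f_le.
  move=> h; apply: le_trans (lee_wpmul2l _ h) _; first by rewrite lee_fin invr_ge0 ler0n.
  by rewrite -EFinM mulrA mulVf ?mul1r // pnatr_eq0 -lt0n.
have := lee_wpmul2l (x := ((size V)%:R)%:E) _ key; rewrite lee_fin ler0n => /(_ isT).
rewrite muleA -EFinM mulfV ?pnatr_eq0 -?lt0n // mul1e => h1.
apply: le_trans h1 _.
have h2 : ((size V)%:R%:E * rho_fam_f f calB L <= m%:R%:E * rho_fam_f f calB L)%E.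
  by apply: lee_wpmul2r => //; rewrite lee_fin ler_nat /m -addnA leq_addr.
apply: le_trans h2 _.
by apply: lee_wpmul2l => //; rewrite lee_fin ler0n.
Qed.
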